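(* Let $\rho$ be a density matrix of rank two on the $N$-qubit space $H=(\mathbb{C}^2)^{\otimes N}$. Let $|\tilde 0\rangle,|\tilde 1\rangle$ be an orthonormal basis of the support (range) of $\rho$, and define operators on $H$ $$\tau_1=|\tilde 0\rangle\langle\tilde 1|+|\tilde 1\rangle\langle\tilde 0|,\quad \tau_2=-i|\tilde 0\rangle\langle\tilde 1|+i|\tilde 1\rangle\langle\tilde 0|,\quad \tau_3=|\tilde 0\rangle\langle\tilde 0|-|\tilde 1\rangle\langle\tilde 1|.$$ Let $W$ be the real symmetric $3\times 3$ matrix with entries $W_{ij}=\mathrm{Tr}\big(\mathcal{S}\,(\tau_i\otimes\tau_j)\big)$, $i,j\in\{1,2,3\}$, and let $w_{\min}$ be its smallest eigenvalue. Then $$\mathcal{E}(\rho)=\mathcal{C}(\rho)+\tfrac12\big(1-\mathrm{Tr}(\rho^2)\big)\,w_{\min}.$$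
   Context: Let $\sigma_1,\sigma_2,\sigma_3$ be the Pauli matrices and $\sigma_0=\mathbb{I}$. For an $N$-qubit state $\rho$ put $T_{\mu_1\dots\mu_N}=\mathrm{Tr}(\rho\,\sigma_{\mu_1}\otimes\dots\otimes\sigma_{\mu_N})$ and define the length of correlations $\mathcal{C}(\rho)=\sum_{j_1,\dots,j_N=1}^{3}T_{j_1\dots j_N}^2$; for a pure state $|\Psi\rangle$ write $\mathcal{C}(\Psi)=\mathcal{C}(|\Psi\rangle\langle\Psi|)$. Consider two copies $H\otimes H$ of the $N$-qubit space, where qubit $n$ of the first copy is paired with qubit $n'$ of the second copy, and define the operator $\mathcal{S}=\bigotimes_{n=1}^{N}\Big(\sum_{j=1}^{3}\sigma_j^{(n)}\otimes\sigma_j^{(n')}\Big)$ on $H\otimes H$; then $\mathcal{C}(\rho)=\mathrm{Tr}\big((\rho\otimes\rho)\,\mathcal{S}\big)$. The convex-roof extension is $\mathcal{E}(\rho)=\min\sum_k\mu_k\,\mathcal{C}(\Psi_k)$, the minimum taken over all pure-state decompositions $\rho=\sum_k\mu_k|\Psi_k\rangle\langle\Psi_k|$ with $\mu_k>0$, $\sum_k\mu_k=1$ and unit vectors $|\Psi_k\rangle$. *)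

(* Defs.v *)
From HB Require Import structures.
From mathcomp Require Import all_boot all_order all_algebra.
From mathcomp Require Import reals.
From mathcomp Require Import complex mxtens.
Set Implicit Arguments. Unset Strict Implicit. Unset Printing Implicit Defensive.
Import Order.TTheory GRing.Theory Num.Theory.
Local Open Scope ring_scope.
Local Open Scope complex_scope.

Section QubitDefs.
Variable R : realType.
Local Notation C := R[i].

Definition adjmx m n (A : 'M[C]_(m, n)) : 'M[C]_(n, m) :=
  \matrix_(i, j) conjc (A j i).

Definition pauli (k : 'I_4) : 'M[C]_2 :=
  \matrix_(a, b)
    match val k with
    | 0 => if a == b then 1 else 0
    | 1 => if a == b then 0 else 1
    | 2 => if a == b then 0 else
           if val a == 0 then - (Complex 0 1) else Complex 0 1
    | _ => if a == b then (if val a == 0 then 1 else -1) else 0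
    end.

Definition qbit N (n : 'I_N) (i : 'I_(2 ^ N)) : 'I_2 := inord (odd (i %/ 2 ^ n)).

Definition qtensor N (A : 'I_N -> 'M[C]_2) : 'M[C]_(2 ^ N) :=
  \matrix_(i, j) \prod_(n < N) A n (qbit n i) (qbit n j).

Definition pauli_string N (mu : 'I_N -> 'I_4) : 'M[C]_(2 ^ N) :=
  qtensor (fun n => pauli (mu n)).

Definition corrT N (rho : 'M[C]_(2 ^ N)) (mu : 'I_N -> 'I_4) : C :=
  \tr (rho *m pauli_string mu).

Definition corr_length N (rho : 'M[C]_(2 ^ N)) : C :=
  \sum_(j : {ffun 'I_N -> 'I_3}) (corrT rho (fun n => lift ord0 (j n))) ^+ 2.

Definition corr_length_pure N (psi : 'cV[C]_(2 ^ N)) : C :=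
  corr_length (psi *m adjmx psi).

Definition pair_op : 'M[C]_(2 * 2) :=
  \sum_(k < 3) (pauli (lift ord0 k) *t pauli (lift ord0 k)).

(* S = (x)_n (sum_j sigma_j^(n) (x) sigma_j^(n'))  on H (x) H, where an index of
   H (x) H is a pair (i1, i2) (via mxtens_index) of indices of the two copies and
   qubit n of the first copy is paired with qubit n of the second copy. *)
Definition Sop N : 'M[C]_(2 ^ N * 2 ^ N) :=
  \matrix_(I, J)
    \prod_(n < N)
      pair_op (mxtens_index (qbit n (mxtens_unindex I).1, qbit n (mxtens_unindex I).2))
              (mxtens_index (qbit n (mxtens_unindex J).1, qbit n (mxtens_unindex J).2)).

Definition density_matrix N (rho : 'M[C]_(2 ^ N)) : Prop :=
  [/\ adjmx rho = rho,
      (forall v : 'cV[C]_(2 ^ N), 0 <= (adjmx v *m rho *m v) 0 0)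
    & \tr rho = 1].

Definition pure_decomposition N (rho : 'M[C]_(2 ^ N)) K
    (mu : 'I_K -> R) (psi : 'I_K -> 'cV[C]_(2 ^ N)) : Prop :=
  [/\ forall k, 0 < mu k,
      \sum_(k < K) mu k = 1,
      (forall k, adjmx (psi k) *m psi k = 1)
    & rho = \sum_(k < K) (mu k)%:C *: (psi k *m adjmx (psi k))].

(* "E(rho) = e": e is the minimum of sum_k mu_k C(Psi_k) over all pure-state
   decompositions (the minimum is attained and is a lower bound). *)
Definition convex_roof_value N (rho : 'M[C]_(2 ^ N)) (e : C) : Prop :=
  (exists K (mu : 'I_K -> R) (psi : 'I_K -> 'cV[C]_(2 ^ N)),
      pure_decomposition rho mu psi /\
      \sum_(k < K) (mu k)%:C * corr_length_pure (psi k) = e)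
  /\ (forall K (mu : 'I_K -> R) (psi : 'I_K -> 'cV[C]_(2 ^ N)),
      pure_decomposition rho mu psi ->
      e <= \sum_(k < K) (mu k)%:C * corr_length_pure (psi k)).

Definition tau N (v0 v1 : 'cV[C]_(2 ^ N)) (k : 'I_3) : 'M[C]_(2 ^ N) :=
  match val k with
  | 0 => v0 *m adjmx v1 + v1 *m adjmx v0
  | 1 => - (Complex 0 1) *: (v0 *m adjmx v1) + (Complex 0 1) *: (v1 *m adjmx v0)
  | _ => v0 *m adjmx v0 - v1 *m adjmx v1
  end.

Definition Wmat N (v0 v1 : 'cV[C]_(2 ^ N)) : 'M[C]_3 :=
  \matrix_(i, j) \tr (Sop N *m (tau v0 v1 i *t tau v0 v1 j)).

End QubitDefs.

(* Main.v *)
Require Import Defs.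
From HB Require Import structures.
From mathcomp Require Import all_boot all_order all_algebra.
From mathcomp Require Import reals.
From mathcomp Require Import complex mxtens.
From mathcomp Require Import sesquilinear spectral.
From mathcomp Require Import ring lra.
Set Implicit Arguments. Unset Strict Implicit. Unset Printing Implicit Defensive.
Import Order.TTheory GRing.Theory Num.Theory.
Local Open Scope ring_scope.


Section Pauli.
Variable R : realType.
Local Notation C := R[i].
Variable N : nat.
Local Notation d := (2 ^ N)%N.

Definition ps (s : {ffun 'I_N -> 'I_3}) : 'M[C]_d :=
  pauli_string R (fun n => lift ord0 (s n)).
Definition tP s (A : 'M[C]_d) := \tr (A *m ps s).
Definition Q (A B : 'M[C]_d) := \sum_s tP s A * tP s B.

Lemma pair_opE a b c e :
  pair_op R (mxtens_index (a, b)) (mxtens_index (c, e)) =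
  \sum_(k < 3) pauli R (lift ord0 k) a c * pauli R (lift ord0 k) b e.
Proof. by rewrite /pair_op summxE; apply: eq_bigr => k _; rewrite tensmxE. Qed.

Lemma SopE' I J : Sop R N I J = \sum_s ps s (mxtens_unindex I).1 (mxtens_unindex J).1
                                      * ps s (mxtens_unindex I).2 (mxtens_unindex J).2.
Proof.
rewrite mxE.
rewrite (eq_bigr (fun n => \sum_(k < 3) pauli R (lift ord0 k) (qbit n (mxtens_unindex I).1) (qbit n (mxtens_unindex J).1) * pauli R (lift ord0 k) (qbit n (mxtens_unindex I).2) (qbit n (mxtens_unindex J).2))); last by move=> n _; rewrite pair_opE.
rewrite bigA_distr_bigA /=; apply: eq_bigr => s _.
by rewrite big_split /= !mxE.
Qed.

Lemma tPE s A : tP s A = \sum_i \sum_j A i j * ps s j i.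
Proof. by rewrite /tP /mxtrace; apply: eq_bigr => i _; rewrite mxE. Qed.

Lemma SopE A B : \tr (Sop R N *m (A *t B)) = Q A B.
Proof.
rewrite /Q /mxtrace.
rewrite (eq_bigr (fun I => \sum_J Sop R N I J * (A *t B) J I)); last by move=> I _; rewrite mxE.
rewrite (eq_bigr (fun I => \sum_s \sum_J
   (A (mxtens_unindex J).1 (mxtens_unindex I).1 * ps s (mxtens_unindex I).1 (mxtens_unindex J).1) *
   (B (mxtens_unindex J).2 (mxtens_unindex I).2 * ps s (mxtens_unindex I).2 (mxtens_unindex J).2))); last first.
  move=> I _; rewrite exchange_big /=; apply: eq_bigr => J _.
  rewrite [(A *t B) J I]mxE SopE' mulr_suml; apply: eq_bigr => s _.
  ring.
rewrite exchange_big /=; apply: eq_bigr => s _.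
rewrite exchange_big /= !(tPE s) mulr_sum; apply: eq_bigr => I _.
rewrite mulr_sum; apply: eq_bigr => J _.
by [].
Qed.

End Pauli.


Section Adj.
Variable R : realType.
Local Notation C := R[i].
Local Open Scope complex_scope.

Lemma conjcD (x y : C) : conjc (x + y) = conjc x + conjc y. Proof. exact: rmorphD. Qed.
Lemma conjcN (x : C) : conjc (- x) = - conjc x. Proof. exact: rmorphN. Qed.
Lemma conjcM (x y : C) : conjc (x * y) = conjc x * conjc y. Proof. exact: rmorphM. Qed.
Lemma conjc_sum I (r : seq I) (P : pred I) (F : I -> C) :
  conjc (\sum_(i <- r | P i) F i) = \sum_(i <- r | P i) conjc (F i).
Proof. exact: rmorph_sum. Qed.
Lemma conjc_prod I (r : seq I) (P : pred I) (F : I -> C) :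
  conjc (\prod_(i <- r | P i) F i) = \prod_(i <- r | P i) conjc (F i).
Proof. exact: rmorph_prod. Qed.

Lemma adjmxE m n (A : 'M[C]_(m, n)) i j : adjmx A i j = conjc (A j i).
Proof. by rewrite mxE. Qed.

Lemma adjmxK m n (A : 'M[C]_(m, n)) : adjmx (adjmx A) = A.
Proof. by apply/matrixP => i j; rewrite !mxE conjcK. Qed.

Lemma adjmxD m n (A B : 'M[C]_(m, n)) : adjmx (A + B) = adjmx A + adjmx B.
Proof. by apply/matrixP => i j; rewrite !mxE conjcD. Qed.

Lemma adjmxN m n (A : 'M[C]_(m, n)) : adjmx (- A) = - adjmx A.
Proof. by apply/matrixP => i j; rewrite !mxE conjcN. Qed.

Lemma adjmxB m n (A B : 'M[C]_(m, n)) : adjmx (A - B) = adjmx A - adjmx B.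
Proof. by rewrite adjmxD adjmxN. Qed.

Lemma adjmxZ m n a (A : 'M[C]_(m, n)) : adjmx (a *: A) = conjc a *: adjmx A.
Proof. by apply/matrixP => i j; rewrite !mxE conjcM. Qed.

Lemma adjmx_sum m n I (r : seq I) (P : pred I) (F : I -> 'M[C]_(m, n)) :
  adjmx (\sum_(i <- r | P i) F i) = \sum_(i <- r | P i) adjmx (F i).
Proof.
by apply/matrixP => i j; rewrite !mxE !summxE conjc_sum; apply: eq_bigr => k _; rewrite mxE.
Qed.

Lemma adjmxM m n p (A : 'M[C]_(m, n)) (B : 'M[C]_(n, p)) :
  adjmx (A *m B) = adjmx B *m adjmx A.
Proof.
apply/matrixP => i j; rewrite !mxE conjc_sum; apply: eq_bigr => k _.
by rewrite !mxE conjcM mulrC.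
Qed.

Lemma real_conj (x : C) : conjc x = x -> x = (complex.Re x)%:C.
Proof.
case: x => a b /= [] => h; apply/eqP; rewrite eq_complex /= eqxx /=.
by apply/eqP; lra.
Qed.

Lemma pauli_herm (k : 'I_4) (a b : 'I_2) : conjc (pauli R k a b) = pauli R k b a.
Proof.
rewrite !mxE.
case: k => [[|[|[|[|k]]]] Hk] //=; case: a => [[|[|a]] Ha] //=; case: b => [[|[|b]] Hb] //=;
 simpc => //.
Qed.

Variable N : nat.
Local Notation d := (2 ^ N)%N.

Lemma ps_herm (s : {ffun 'I_N -> 'I_3}) (i j : 'I_d) : conjc (ps R s i j) = ps R s j i.
Proof.
rewrite /ps /pauli_string /qtensor [in LHS]mxE [in RHS]mxE conjc_prod; apply: eq_bigr => n _.
exact: pauli_herm.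
Qed.

Lemma tP_real s (A : 'M[C]_d) : adjmx A = A -> conjc (tP s A) = tP s A.
Proof.
move=> hA; rewrite !tPE conjc_sum exchange_big /=; apply: eq_bigr => i _.
rewrite conjc_sum; apply: eq_bigr => j _.
by rewrite conjcM ps_herm -adjmxE hA.
Qed.

Lemma Q_real (A B : 'M[C]_d) : adjmx A = A -> adjmx B = B -> conjc (Q A B) = Q A B.
Proof.
move=> hA hB; rewrite /Q conjc_sum; apply: eq_bigr => s _.
by rewrite conjcM !tP_real.
Qed.

Lemma QC (A B : 'M[C]_d) : Q A B = Q B A.
Proof. by rewrite /Q; apply: eq_bigr => s _; rewrite mulrC. Qed.

Lemma tP_lin s (A B : 'M[C]_d) a : tP s (a *: A + B) = a * tP s A + tP s B.
Proof. by rewrite /tP mulmxDl -scalemxAl mxtraceD mxtraceZ. Qed.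

Lemma tP_sum s I (r : seq I) (P : pred I) (F : I -> 'M[C]_d) :
  tP s (\sum_(i <- r | P i) F i) = \sum_(i <- r | P i) tP s (F i).
Proof.
rewrite /tP mulmx_suml.
by rewrite (big_morph (fun A : 'M[C]_d => \tr A) (@mxtraceD _ _) (mxtrace0 _ _)).
Qed.

Lemma tPZ s a (A : 'M[C]_d) : tP s (a *: A) = a * tP s A.
Proof. by rewrite /tP -scalemxAl mxtraceZ. Qed.

Lemma Q_bilin (I J : finType) (a : I -> C) (b : J -> C) (A : I -> 'M[C]_d) (B : J -> 'M[C]_d) :
  Q (\sum_i a i *: A i) (\sum_j b j *: B j) = \sum_i \sum_j a i * b j * Q (A i) (B j).
Proof.
rewrite /Q.
under eq_bigr do rewrite !tP_sum.
under [in RHS]eq_bigr do under eq_bigr do rewrite mulr_sumr.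
under [in RHS]eq_bigr do rewrite exchange_big.
rewrite exchange_big; apply: eq_bigr => s _.
rewrite mulr_suml; apply: eq_bigr => i _.
rewrite mulr_sumr; apply: eq_bigr => j _.
rewrite !tPZ; ring.
Qed.

End Adj.


Lemma sum2 (V : nmodType) (F : 'I_2 -> V) : \sum_(i < 2) F i = F ord0 + F (lift ord0 ord0).
Proof. by rewrite big_ord_recl big_ord1. Qed.

Section Span.
Variable R : realType.
Local Notation C := R[i].
Local Open Scope complex_scope.
Variable N : nat.
Local Notation d := (2 ^ N)%N.
Variables v0 v1 : 'cV[C]_d.

Definition vv (a : 'I_2) : 'cV[C]_d := if val a == 0%N then v0 else v1.
Definition Mm : 'M[C]_(d, 2) := \matrix_(i, a) vv a i 0.

Lemma MZM (Z : 'M[C]_2) :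
  Mm *m Z *m adjmx Mm = \sum_a \sum_b Z a b *: (vv a *m adjmx (vv b)).
Proof.
apply/matrixP => i j.
transitivity (\sum_a \sum_b Mm i a * Z a b * conjc (Mm j b)).
  rewrite mxE exchange_big; apply: eq_bigr => b _; rewrite !mxE mulr_suml.
  by apply: eq_bigr => a _; rewrite !mxE.
rewrite summxE; apply: eq_bigr => a _; rewrite summxE; apply: eq_bigr => b _.
by rewrite !mxE big_ord1 !mxE; ring.
Qed.

Definition T (k : 'I_4) : 'M[C]_d := Mm *m pauli R k *m adjmx Mm.

Lemma tauE i : tau v0 v1 i = T (lift ord0 i).
Proof.
rewrite /T MZM !sum2 !mxE /=.
case: i => [[|[|[|i]]] Hi] //=; rewrite /vv /=.
- by rewrite !scale0r !scale1r add0r !addr0.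
- rewrite !scale0r add0r !addr0; congr (_ + _); congr (_ *: _).
- by rewrite !scale0r !scale1r !addr0 add0r scaleN1r.
Qed.

Lemma adj_pauli k : adjmx (pauli R k) = pauli R k.
Proof. by apply/matrixP => a b; rewrite adjmxE pauli_herm. Qed.

Lemma T_herm k : adjmx (T k) = T k.
Proof. by rewrite /T !adjmxM adjmxK adj_pauli mulmxA. Qed.

End Span.


Section Spec.
Variable R : realType.
Local Notation C := R[i].
Local Open Scope complex_scope.

Lemma adjmx_tC m n (A : 'M[C]_(m, n)) : adjmx A = map_mx Num.conj (A ^T).
Proof. by apply/matrixP => i j; rewrite !mxE. Qed.

Lemma spectral_lb n (A : 'M[C]_n) w : adjmx A = A ->
  (forall x, eigenvalue A x -> w <= x) ->
  forall z : 'cV_n, w * (adjmx z *m z) 0 0 <= (adjmx z *m A *m z) 0 0.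
Proof.
move=> hA hw z.
have hn : A \is normalmx.
  by apply/normalmxP; rewrite -adjmx_tC hA.
have hAE := orthomx_spectralP hn.
set P := spectralmx A in hAE; set sp := spectral_diag A in hAE.
have Pu : P \is unitarymx by exact: spectral_unitarymx.
have Punit : P \in unitmx by exact: spectral_unit.
have hinv : invmx P = adjmx P by rewrite invmx_unitary // adjmx_tC.
have hPP : adjmx P *m P = 1%:M by rewrite -hinv mulVmx.
have heig : forall i, w <= sp 0 i.
  move=> i; apply: hw; apply/eigenvalueP; exists (row i P).
    rewrite -row_mul {1}hAE !mulmxA mulmxV // mul1mx.
    by apply/rowP => j; rewrite mul_diag_mx !mxE.
  apply/negP => /eqP h0.
  have : row i (P *m invmx P) = 0 by rewrite row_mul h0 mul0mx.
  rewrite mulmxV // => /rowP /(_ i); rewrite !mxE eqxx /= => /eqP.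
  by rewrite oner_eq0.
set y := P *m z.
have e1 : adjmx z *m A *m z = adjmx y *m diag_mx sp *m y.
  by rewrite {1}hAE hinv /y adjmxM !mulmxA.
have e2 : adjmx z *m z = adjmx y *m y.
  by rewrite /y adjmxM -mulmxA [adjmx P *m _]mulmxA hPP mul1mx.
clearbody y; rewrite e1 e2 -subr_ge0 !mxE mulr_sumr -sumrB; apply: sumr_ge0 => i _.
rewrite mul_mx_diag !mxE.
set u := conjc (y i 0).
have -> : u * sp 0 i * y i 0 - w * (u * y i 0) = (sp 0 i - w) * (y i 0 * u) by ring.
apply: mulr_ge0.
  by rewrite subr_ge0.
exact: mulcJ_ge0.
Qed.
End Spec.


Definition o0 := @Ordinal 2 0 isT.
Definition o1 := @Ordinal 2 1 isT.
Definition k0 := @Ordinal 4 0 isT.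
Definition k1 := @Ordinal 4 1 isT.
Definition k2 := @Ordinal 4 2 isT.
Definition k3 := @Ordinal 4 3 isT.

Lemma sum4 (V : nmodType) (F : 'I_4 -> V) :
  \sum_(i < 4) F i = F k0 + F k1 + F k2 + F k3.
Proof.
rewrite !big_ord_recl big_ord0 addr0 !addrA.
by congr (_ + _ + _ + _); congr F; apply: val_inj.
Qed.

Lemma sum2' (V : nmodType) (F : 'I_2 -> V) :
  \sum_(i < 2) F i = F o0 + F o1.
Proof. by rewrite sum2; congr (_ + _); congr F; apply: val_inj. Qed.

Section Two.
Variable R : realType.
Local Notation C := R[i].
Local Open Scope complex_scope.
Local Notation Re := complex.Re.
Local Notation Im := complex.Im.

Lemma ReD (x y : C) : Re (x + y) = Re x + Re y. Proof. by case: x; case: y. Qed.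
Lemma Re0 : Re (0 : C) = 0. Proof. by []. Qed.
Lemma Re_sum I (r : seq I) (P : pred I) (F : I -> C) :
  Re (\sum_(i <- r | P i) F i) = \sum_(i <- r | P i) Re (F i).
Proof. exact: (big_morph _ ReD Re0). Qed.
Lemma ReRM (x : R) (z : C) : Re (x%:C * z) = x * Re z.
Proof. by case: z => a b /=; rewrite mul0r subr0. Qed.
Lemma RCD (x y : R) : (x + y)%:C = x%:C + y%:C :> C. Proof. by apply/eqP; rewrite eq_complex /= addr0 !eqxx. Qed.
Lemma RCM (x y : R) : (x * y)%:C = x%:C * y%:C :> C. Proof. by apply/eqP; rewrite eq_complex /= !mul0r mulr0 subr0 addr0 !eqxx. Qed.
Lemma RC0 : (0 : R)%:C = 0 :> C. Proof. by []. Qed.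
Lemma RC_sum I (r : seq I) (P : pred I) (F : I -> R) :
  (\sum_(i <- r | P i) F i)%:C = \sum_(i <- r | P i) (F i)%:C :> C.
Proof. exact: (big_morph _ RCD RC0). Qed.

Definition blochZ (c : 'I_4 -> R) : 'M[C]_2 := \sum_k (c k)%:C *: pauli R k.
Definition coordZ (Z : 'M[C]_2) (k : 'I_4) : R := Re (\tr (Z *m pauli R k)) / 2.


Lemma blochZE c :
  blochZ c = \matrix_(a, b) if val a == 0%N then
     (if val b == 0%N then Complex (c k0 + c k3) 0 else Complex (c k1) (- c k2))
   else (if val b == 0%N then Complex (c k1) (c k2) else Complex (c k0 - c k3) 0).
Proof.
apply/matrixP => a b; rewrite /blochZ summxE sum4 !mxE.
case: a => [[|[|a]] Ha] //=; case: b => [[|[|b]] Hb] //=;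
  apply/eqP; rewrite eq_complex /=; apply/andP; split; apply/eqP; ring.
Qed.


Lemma coordZE Z k : coordZ Z k =
  if val k == 0%N then (Re (Z o0 o0) + Re (Z o1 o1)) / 2
  else if val k == 1%N then (Re (Z o0 o1) + Re (Z o1 o0)) / 2
  else if val k == 2%N then (Im (Z o1 o0) - Im (Z o0 o1)) / 2
  else (Re (Z o0 o0) - Re (Z o1 o1)) / 2.
Proof.
rewrite /coordZ /mxtrace sum2' !mxE !sum2' !mxE.
case: k => [[|[|[|[|k]]]] Hk] //=;
 case: (Z o0 o0) => [a b]; case: (Z o0 o1) => [a1 b1]; case: (Z o1 o0) => [a2 b2];
 case: (Z o1 o1) => [a3 b3] /=; ring.
Qed.

Lemma herm_bloch Z : adjmx Z = Z -> Z = blochZ (coordZ Z).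
Proof.
move=> hZ; have h a b : conjc (Z b a) = Z a b.
  by rewrite -[RHS](congr1 (fun M : 'M[C]_2 => M a b) hZ) mxE.
rewrite blochZE; apply/matrixP => a b; rewrite mxE /= !coordZE /=.
move: (h o0 o0) (h o0 o1) (h o1 o1).
have two (x : 'I_2) : x = o0 \/ x = o1.
  by case: x => [[|[|x]] Hx] //; [left|right]; apply: val_inj.
case: (two a) => ->; case: (two b) => -> /=;
case: (Z o0 o0) => [p q]; case: (Z o0 o1) => [p1 q1]; case: (Z o1 o0) => [p2 q2];
case: (Z o1 o1) => [p3 q3] /=;
move=> /eqP; rewrite eq_complex => /andP [/eqP e1 /eqP e2];
move=> /eqP; rewrite eq_complex => /andP [/eqP e3 /eqP e4];
move=> /eqP; rewrite eq_complex => /andP [/eqP e5 /eqP e6];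
rewrite /= in e1 e2 e3 e4 e5 e6;
apply/eqP; rewrite eq_complex /=; apply/andP; split; apply/eqP; lra.
Qed.

Lemma tr_bloch2 c : \tr (blochZ c *m blochZ c) = (2 * \sum_k c k ^+ 2)%:C.
Proof.
rewrite blochZE /mxtrace sum2' !mxE !sum2' !mxE sum4 /=.
apply/eqP; rewrite eq_complex /=; apply/andP; split; apply/eqP; ring.
Qed.

Lemma det_bloch c : \det (blochZ c) = (c k0 ^+ 2 - c k1 ^+ 2 - c k2 ^+ 2 - c k3 ^+ 2)%:C.
Proof.
rewrite (expand_det_row _ ord0) sum2 /cofactor !det_mx11 !mxE blochZE !mxE /=.
apply/eqP; rewrite eq_complex /=; apply/andP; split; apply/eqP; ring.
Qed.

Lemma coordZ_bloch c k : coordZ (blochZ c) k = c k.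
Proof.
rewrite coordZE blochZE !mxE /=.
case: k => [[|[|[|[|k]]]] Hk] //=.
- by rewrite (_ : Ordinal Hk = k0); [lra | apply: val_inj].
- by rewrite (_ : Ordinal Hk = k1); [lra | apply: val_inj].
- by rewrite (_ : Ordinal Hk = k2); [lra | apply: val_inj].
- by rewrite (_ : Ordinal Hk = k3); [lra | apply: val_inj].
Qed.

Lemma blochZ_lin I (r : seq I) (P : pred I) (mu : I -> R) (c : I -> 'I_4 -> R) :
  blochZ (fun k => \sum_(i <- r | P i) mu i * c i k) = \sum_(i <- r | P i) (mu i)%:C *: blochZ (c i).
Proof.
rewrite /blochZ.
under eq_bigr do rewrite RC_sum scaler_suml.
rewrite exchange_big /=; apply: eq_bigr => i _.
rewrite scaler_sumr; apply: eq_bigr => k _.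
by rewrite RCM scalerA.
Qed.

Lemma coordZ_lin (I : finType) (mu : I -> R) (Z : I -> 'M[C]_2) k :
  coordZ (\sum_i (mu i)%:C *: Z i) k = \sum_i mu i * coordZ (Z i) k.
Proof.
rewrite /coordZ mulmx_suml.
rewrite (big_morph (fun A : 'M[C]_2 => \tr A) (@mxtraceD _ _) (mxtrace0 _ _)).
rewrite Re_sum mulr_suml; apply: eq_bigr => i _.
by rewrite -scalemxAl mxtraceZ ReRM mulrA.
Qed.

Lemma pauli0 : pauli R k0 = 1%:M.
Proof. by apply/matrixP => a b; rewrite !mxE /=; case: (a == b). Qed.

Lemma pure_herm (phi : 'cV[C]_2) : adjmx (phi *m adjmx phi) = phi *m adjmx phi.
Proof. by rewrite adjmxM adjmxK. Qed.

Lemma pure_coord0 (phi : 'cV[C]_2) : adjmx phi *m phi = 1 ->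
  coordZ (phi *m adjmx phi) k0 = 1 / 2.
Proof.
move=> h; rewrite /coordZ pauli0 mulmx1 mxtrace_mulC h mxtrace1 /=.
by [].
Qed.

Lemma pure_norm (phi : 'cV[C]_2) : adjmx phi *m phi = 1 ->
  \sum_k coordZ (phi *m adjmx phi) k ^+ 2 = 1 / 2.
Proof.
move=> h.
have e : \tr ((phi *m adjmx phi) *m (phi *m adjmx phi)) = 1.
  by rewrite mulmxA -[phi *m _ *m phi]mulmxA h mulmx1 mxtrace_mulC h mxtrace1.
move: e; rewrite {1 2}(herm_bloch (pure_herm phi)) tr_bloch2.
move=> /eqP; rewrite eq_complex /= => /andP [/eqP e _].
lra.
Qed.

End Two.


Section PSD.
Variable R : realType.
Local Notation C := R[i].
Local Open Scope complex_scope.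

Lemma two_cases (x : 'I_2) : x = o0 \/ x = o1.
Proof. by case: x => [[|[|x]] Hx] //; [left|right]; apply: val_inj. Qed.

Lemma det2 (Z : 'M[C]_2) : \det Z = Z o0 o0 * Z o1 o1 - Z o0 o1 * Z o1 o0.
Proof.
rewrite (expand_det_row _ ord0) sum2 /cofactor !det_mx11 !mxE /=.
rewrite (_ : lift ord0 ord0 = o1 :> 'I_2); last by apply: val_inj.
rewrite (_ : ord0 = o0 :> 'I_2); last by apply: val_inj.
rewrite (_ : lift o1 0 = o0 :> 'I_2); last by apply: val_inj.
rewrite /= expr0 expr1; ring.
Qed.

Lemma psd_det (Z : 'M[C]_2) : adjmx Z = Z ->
  (forall u : 'cV[C]_2, 0 <= (adjmx u *m Z *m u) 0 0) -> \tr Z = 1 -> 0 <= \det Z.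
Proof.
move=> hZ hpos htr.
have h a b : conjc (Z b a) = Z a b.
  by rewrite -[RHS](congr1 (fun M : 'M[C]_2 => M a b) hZ) mxE.
pose u1 : 'cV[C]_2 := \col_i (if val i == 0%N then - Z o0 o1 else Z o0 o0).
pose u2 : 'cV[C]_2 := \col_i (if val i == 0%N then Z o1 o1 else - Z o1 o0).
have E1 : (adjmx u1 *m Z *m u1) 0 0 = Z o0 o0 * \det Z.
  rewrite det2 !mxE !sum2' !mxE /= !sum2' !mxE /= conjcN !h; ring.
have E2 : (adjmx u2 *m Z *m u2) 0 0 = Z o1 o1 * \det Z.
  rewrite det2 !mxE !sum2' !mxE /= !sum2' !mxE /= conjcN !h; ring.
have := hpos u1; have := hpos u2; rewrite E1 E2 => p2 p1.
have -> : \det Z = (Z o0 o0 * \det Z) + (Z o1 o1 * \det Z).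
  by rewrite -mulrDl; move: htr; rewrite /mxtrace sum2' => ->; rewrite mul1r.
exact: addr_ge0.
Qed.

End PSD.


Section Quad.
Variable R : realType.

Definition Bf (G : 'I_4 -> 'I_4 -> R) (x y : 'I_4 -> R) := \sum_k \sum_l x k * y l * G k l.

Lemma Bf_sub G x y : Bf G (fun j => x j - y j) (fun j => x j - y j) =
  Bf G x x - Bf G x y - Bf G y x + Bf G y y.
Proof.
rewrite /Bf -!sumrB -big_split /=; apply: eq_bigr => k _.
rewrite -!sumrB -big_split /=; apply: eq_bigr => l _; ring.
Qed.

Lemma Bf_suml K (mu : 'I_K -> R) (c : 'I_K -> 'I_4 -> R) G y :
  \sum_i mu i * Bf G (c i) y = Bf G (fun j => \sum_i mu i * c i j) y.
Proof.
rewrite /Bf; under eq_bigr do rewrite mulr_sumr.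
rewrite exchange_big /=; apply: eq_bigr => k _.
under eq_bigr do rewrite mulr_sumr.
rewrite exchange_big /=; apply: eq_bigr => l _.
by rewrite !mulr_suml; apply: eq_bigr => i _; ring.
Qed.

Lemma Bf_sumr K (mu : 'I_K -> R) (c : 'I_K -> 'I_4 -> R) G y :
  \sum_i mu i * Bf G y (c i) = Bf G y (fun j => \sum_i mu i * c i j).
Proof.
rewrite /Bf; under eq_bigr do rewrite mulr_sumr.
rewrite exchange_big /=; apply: eq_bigr => k _.
under eq_bigr do rewrite mulr_sumr.
rewrite exchange_big /=; apply: eq_bigr => l _.
by rewrite mulr_sumr mulr_suml; apply: eq_bigr => i _; ring.
Qed.

Lemma Bf_decomp K (mu : 'I_K -> R) (c : 'I_K -> 'I_4 -> R) G :
  \sum_i mu i = 1 ->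
  \sum_i mu i * Bf G (c i) (c i) =
  Bf G (fun j => \sum_i mu i * c i j) (fun j => \sum_i mu i * c i j) +
  \sum_i mu i * Bf G (fun j => c i j - \sum_i' mu i' * c i' j) (fun j => c i j - \sum_i' mu i' * c i' j).
Proof.
move=> hmu; set cb := fun j => \sum_i mu i * c i j.
under [X in _ = _ + X]eq_bigr do rewrite Bf_sub.
have -> : \sum_i mu i * (Bf G (c i) (c i) - Bf G (c i) cb - Bf G cb (c i) + Bf G cb cb) =
   \sum_i mu i * Bf G (c i) (c i) - \sum_i mu i * Bf G (c i) cb - \sum_i mu i * Bf G cb (c i)
   + \sum_i mu i * Bf G cb cb.
  by rewrite -!sumrB -big_split /=; apply: eq_bigr => i _; ring.
by rewrite Bf_suml Bf_sumr -mulr_suml hmu mul1r; ring.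
Qed.

End Quad.


Section State.
Variable R : realType.
Local Notation C := R[i].
Local Open Scope complex_scope.
Local Notation Re := complex.Re.
Local Notation Im := complex.Im.

Lemma coordZ_scale (a : R) Z k : coordZ (a%:C *: Z) k = a * coordZ Z k.
Proof. by rewrite /coordZ -scalemxAl mxtraceZ ReRM mulrA. Qed.

Lemma bloch_state (n1 n2 n3 : R) : n1 ^+ 2 + n2 ^+ 2 + n3 ^+ 2 = 1 ->
  exists phi : 'cV[C]_2, adjmx phi *m phi = 1 /\
    coordZ (phi *m adjmx phi) k0 = 1 / 2 /\ coordZ (phi *m adjmx phi) k1 = n1 / 2 /\
    coordZ (phi *m adjmx phi) k2 = n2 / 2 /\ coordZ (phi *m adjmx phi) k3 = n3 / 2.
Proof.
move=> hn.
have hn3 : -1 <= n3 by nra.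
have [h3|h3] := eqVneq (1 + n3) 0.
  have e3 : n3 = -1 by lra.
  have e1 : n1 = 0 by nra.
  have e2 : n2 = 0 by nra.
  exists (\col_a (if val a == 0%N then 0 else 1)).
  split.
    apply/matrixP => i j; rewrite !ord1 !mxE sum2' !mxE /=.
    by apply/eqP; rewrite eq_complex /=; apply/andP; split; apply/eqP; lra.
  rewrite !coordZE !mxE /= !big_ord1 !mxE /= e1 e2 e3.
  by rewrite /= !mul0r !mulr0 !subr0 !add0r !mulr1 !addr0; repeat split; lra.
have hpos : 0 < 1 + n3 by rewrite lt_def h3 /=; lra.
set w := (2 * (1 + n3))^-1.
have hw : w * (2 * (1 + n3)) = 1 by rewrite /w mulVf // mulf_neq0 // pnatr_eq0.
have hw0 : 0 <= w by rewrite /w invr_ge0; lra.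
set x := Num.sqrt w.
have hx : x * x = w by rewrite -expr2 sqr_sqrtr.
have p1 : w * (n1 ^+ 2 + n2 ^+ 2 + n3 ^+ 2) = w by rewrite hn mulr1.
have p2 : n1 * (w * (2 * (1 + n3))) = n1 by rewrite hw mulr1.
have p3 : n2 * (w * (2 * (1 + n3))) = n2 by rewrite hw mulr1.
have p4 : n3 * (w * (2 * (1 + n3))) = n3 by rewrite hw mulr1.
set psi0 : 'cV[C]_2 := \col_a (if val a == 0%N then (1 + n3)%:C else Complex n1 n2).
exists (x%:C *: psi0).
have eZ : (x%:C *: psi0) *m adjmx (x%:C *: psi0) = w%:C *: (psi0 *m adjmx psi0).
  by rewrite adjmxZ conjc_real -scalemxAl -scalemxAr scalerA -RCM hx.
rewrite eZ !coordZ_scale !coordZE !mxE /= !big_ord1 !mxE /=.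
split.
  rewrite adjmxZ conjc_real -scalemxAl -scalemxAr scalerA -RCM hx.
  apply/matrixP => i j; rewrite !ord1 !mxE sum2' !mxE /=.
  by apply/eqP; rewrite eq_complex /=; apply/andP; split; apply/eqP; lra.
by repeat split; lra.
Qed.
End State.


Section Main.
Variable R : realType.
Local Notation C := R[i].
Local Open Scope complex_scope.
Local Notation Re := complex.Re.
Local Notation Im := complex.Im.
Variable N : nat.
Local Notation d := (2 ^ N)%N.
Variables (rho : 'M[C]_d) (v0 v1 : 'cV[C]_d) (wmin : C).
Hypotheses (hdm : density_matrix rho) (hrank : \rank rho = 2%N)
  (h0 : adjmx v0 *m v0 = 1) (h1 : adjmx v1 *m v1 = 1) (h01 : adjmx v0 *m v1 = 0)
  (hspan : (col_mx v0^T v1^T == rho^T)%MS)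
  (heig : eigenvalue (Wmat v0 v1) wmin)
  (hmin : forall w, eigenvalue (Wmat v0 v1) w -> wmin <= w).

Local Notation M := (Mm v0 v1).

Lemma h10 : adjmx v1 *m v0 = 0.
Proof.
have := congr1 (@adjmx R _ _) h01; rewrite adjmxM adjmxK => ->.
by apply/matrixP => i j; rewrite !mxE conjc0.
Qed.

Lemma MtM_entry a b : (adjmx M *m M) a b = (adjmx (vv v0 v1 a) *m vv v0 v1 b) 0 0.
Proof. by rewrite !mxE; apply: eq_bigr => i _; rewrite !mxE. Qed.

Lemma MtM : adjmx M *m M = 1%:M.
Proof.
apply/matrixP => a b; rewrite MtM_entry [RHS]mxE.
case: (two_cases a) => ->; case: (two_cases b) => -> /=; rewrite /vv /=.
- by rewrite h0 mxE.
- by rewrite h01 mxE.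
- by rewrite h10 mxE.
- by rewrite h1 mxE.
Qed.

Lemma colM : col_mx v0^T v1^T = (M^T : 'M_(1 + 1, d)).
Proof.
apply/matrixP => i j; rewrite !mxE; case: splitP => k hk; rewrite !mxE /vv.
- by rewrite -[\val i]/(nat_of_ord i) hk (ord1 k).
- by rewrite -[\val i]/(nat_of_ord i) hk (ord1 k).
Qed.

Lemma rho_MY : exists Y : 'M[C]_(2, d), rho = M *m Y.
Proof.
move: hspan => /andP [_ /submxP [D hD]].
exists (D^T : 'M_(1+1, d)); rewrite -[rho]trmxK hD colM trmx_mul trmxK.
by [].
Qed.

Lemma P_rho : M *m adjmx M *m rho = rho.
Proof. by case: rho_MY => Y ->; rewrite mulmxA -[M *m _ *m M]mulmxA MtM mulmx1. Qed.

Lemma rho_herm : adjmx rho = rho.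
Proof. by case: hdm. Qed.

Lemma rho_P : rho *m (M *m adjmx M) = rho.
Proof.
have := congr1 (@adjmx R _ _) P_rho; rewrite !adjmxM adjmxK rho_herm => h.
exact: h.
Qed.

Definition Zb := adjmx M *m rho *m M.

Lemma rho_Zb : rho = M *m Zb *m adjmx M.
Proof. by rewrite /Zb !mulmxA P_rho -mulmxA rho_P. Qed.

Lemma Zb_herm : adjmx Zb = Zb.
Proof. by rewrite /Zb !adjmxM adjmxK rho_herm mulmxA. Qed.

Lemma Zb_tr : \tr Zb = 1.
Proof.
rewrite /Zb mxtrace_mulC mulmxA P_rho; by case: hdm.
Qed.

Lemma Zb_psd (u : 'cV[C]_2) : 0 <= (adjmx u *m Zb *m u) 0 0.
Proof.
case: hdm => _ hpos _.
have := hpos (M *m u); rewrite adjmxM /Zb !mulmxA.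
by [].
Qed.

Lemma Zb_rank : \rank Zb = 2%N.
Proof.
apply/eqP; rewrite eqn_leq rank_leq_col /=.
rewrite -{1}hrank rho_Zb.
exact: leq_trans (mxrankM_maxl _ _) (mxrankM_maxr _ _).
Qed.

Lemma Zb_det_neq0 : \det Zb != 0.
Proof.
have : row_full Zb by rewrite /row_full Zb_rank.
by rewrite row_full_unit unitmxE unitfE.
Qed.

Definition cb := coordZ Zb.

Lemma Zb_bloch : Zb = blochZ cb.
Proof. exact: herm_bloch Zb_herm. Qed.

Lemma cb0 : cb k0 = 1 / 2.
Proof. by rewrite /cb /coordZ pauli0 mulmx1 Zb_tr. Qed.

Lemma cb_pos : cb k1 ^+ 2 + cb k2 ^+ 2 + cb k3 ^+ 2 < 1 / 4.
Proof.
have hd : 0 < \det Zb by rewrite lt_def Zb_det_neq0 psd_det // ?Zb_herm ?Zb_tr //; exact: Zb_psd.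
move: hd; rewrite {1}Zb_bloch det_bloch cb0 ltcR => hd.
lra.
Qed.

Lemma tr_rho2 : \tr (rho *m rho) = (2 * \sum_k cb k ^+ 2)%:C.
Proof.
rewrite {1 2}rho_Zb; move: (Zb) (Zb_bloch) => Z hZ.
rewrite !mulmxA -[M *m Z *m adjmx M *m M]mulmxA MtM mulmx1.
rewrite mxtrace_mulC !mulmxA MtM mul1mx hZ tr_bloch2.
by [].
Qed.

Local Notation T := (T v0 v1).
Local Notation W := (Wmat v0 v1).

Definition Gr (k l : 'I_4) : R := Re (Q (T k) (T l)).

Lemma QT k l : Q (T k) (T l) = (Gr k l)%:C.
Proof. by apply: real_conj; apply: Q_real; apply: T_herm. Qed.

Lemma Gr_sym k l : Gr k l = Gr l k.
Proof. by rewrite /Gr QC. Qed.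

Lemma MblochM c : M *m blochZ c *m adjmx M = \sum_k (c k)%:C *: T k.
Proof.
rewrite /blochZ mulmx_sumr mulmx_suml; apply: eq_bigr => k _.
by rewrite -scalemxAr -scalemxAl.
Qed.

Lemma F_bloch c : Q (M *m blochZ c *m adjmx M) (M *m blochZ c *m adjmx M) = (Bf Gr c c)%:C.
Proof.
rewrite MblochM Q_bilin /Bf RC_sum; apply: eq_bigr => k _.
rewrite RC_sum; apply: eq_bigr => l _.
by rewrite QT !RCM.
Qed.

Lemma WE i j : W i j = (Gr (lift ord0 i) (lift ord0 j))%:C.
Proof. by rewrite mxE SopE !tauE QT. Qed.

Lemma W_herm : adjmx W = W.
Proof. by apply/matrixP => i j; rewrite adjmxE !WE conjc_real Gr_sym. Qed.

Definition Wr (i j : 'I_3) := Gr (lift ord0 i) (lift ord0 j).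

Lemma quad_norm (y : 'I_3 -> R) :
  (adjmx (\col_i (y i)%:C) *m (\col_i (y i)%:C)) 0 0 = (\sum_i y i ^+ 2)%:C.
Proof.
rewrite mxE RC_sum; apply: eq_bigr => i _.
by rewrite !mxE conjc_real -RCM expr2.
Qed.

Lemma quad_W (y : 'I_3 -> R) :
  (adjmx (\col_i (y i)%:C) *m W *m (\col_i (y i)%:C)) 0 0 = (\sum_i \sum_j y i * y j * Wr i j)%:C.
Proof.
rewrite mxE RC_sum; under [RHS]eq_bigr do rewrite RC_sum.
rewrite [RHS]exchange_big /=; apply: eq_bigr => j _.
rewrite !mxE mulr_suml; apply: eq_bigr => i _.
rewrite [adjmx _ 0 i]mxE mxE (WE i j) conjc_real -!RCM /Wr; congr (_%:C); ring.
Qed.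

Lemma wmin_real : wmin = (Re wmin)%:C.
Proof.
have := spectral_lb W_herm hmin (\col_i ((fun _ : 'I_3 => 1 : R) i)%:C).
rewrite quad_norm quad_W.
move: (\sum_i \sum_j _) => s2.
rewrite !big_ord_recl big_ord0 /= expr1n.
case: wmin => a b /=; rewrite lecE /= => /andP [/eqP hb _].
apply/eqP; rewrite eq_complex /= eqxx /=; apply/eqP; lra.
Qed.

Definition wr := Re wmin.

Lemma spec_real (y : 'I_3 -> R) : wr * \sum_i y i ^+ 2 <= \sum_i \sum_j y i * y j * Wr i j.
Proof.
have := spectral_lb W_herm hmin (\col_i (y i)%:C).
by rewrite quad_norm quad_W {1}wmin_real -RCM lecR.
Qed.

Lemma ord0k0 : (ord0 : 'I_4) = k0. Proof. by apply: val_inj. Qed.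

Lemma Bf_lift G (y : 'I_4 -> R) : y k0 = 0 -> Bf G y y =
  \sum_(i < 3) \sum_(j < 3) y (lift ord0 i) * y (lift ord0 j) * G (lift ord0 i) (lift ord0 j).
Proof.
move=> hy; rewrite /Bf big_ord_recl ord0k0 hy big1 ?add0r; last by move=> l _; rewrite !mul0r.
apply: eq_bigr => i _; rewrite big_ord_recl ord0k0 hy mulr0 mul0r add0r.
by [].
Qed.

Definition idG (k l : 'I_4) : R := (k == l)%:R.

Lemma Bf_id y : Bf idG y y = \sum_k y k ^+ 2.
Proof.
rewrite /Bf; apply: eq_bigr => k _.
rewrite (bigD1 k) //= /idG eqxx mulr1 big1 ?addr0 ?expr2 //.
by move=> l hl; rewrite eq_sym (negbTE hl) mulr0.
Qed.

Lemma sum4_lift (y : 'I_4 -> R) : y k0 = 0 -> \sum_k y k ^+ 2 = \sum_(i < 3) y (lift ord0 i) ^+ 2.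
Proof. by move=> hy; rewrite big_ord_recl ord0k0 hy expr0n add0r. Qed.

Lemma mulcJ_eq0 (x : C) : (x * conjc x == 0) = (x == 0).
Proof. exact: mul_conjC_eq0. Qed.

Lemma vec_eq0 n (w : 'cV[C]_n) : (adjmx w *m w) 0 0 = 0 -> w = 0.
Proof.
have hge : forall i : 'I_n, true -> 0 <= adjmx w 0 i * w i 0.
  by move=> i _; rewrite mxE mulrC; exact: mulcJ_ge0.
rewrite mxE => /(psumr_eq0P hge) h.
apply/matrixP => i j; rewrite ord1 mxE; apply/eqP.
by rewrite -mulcJ_eq0 mulrC -(h i isT) mxE.
Qed.

Lemma PP : M *m adjmx M *m (M *m adjmx M) = M *m adjmx M.
Proof. by rewrite mulmxA -[M *m adjmx M *m M]mulmxA MtM mulmx1. Qed.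

Lemma P_herm : adjmx (M *m adjmx M) = M *m adjmx M.
Proof. by rewrite adjmxM adjmxK. Qed.

Lemma adjmx0 m n : adjmx (0 : 'M[C]_(m, n)) = 0.
Proof. by apply/matrixP => i j; rewrite !mxE conjc0. Qed.

Lemma mx11M (A B : 'M[C]_1) : (A *m B) 0 0 = A 0 0 * B 0 0.
Proof. by rewrite mxE big_ord1. Qed.

Lemma in_span K (mu : 'I_K -> R) psi : pure_decomposition rho mu psi ->
  forall k, psi k = M *m (adjmx M *m psi k).
Proof.
case=> hmu _ _ hrho k.
set w := psi k - M *m adjmx M *m psi k.
have hwP : adjmx w *m (M *m adjmx M) = 0.
  have h : M *m adjmx M *m w = 0 by rewrite /w mulmxBr mulmxA PP subrr.
  by rewrite -P_herm -adjmxM h adjmx0.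
have hwr : adjmx w *m rho = 0 by rewrite -P_rho mulmxA hwP mul0mx.
have hz : forall j, (adjmx w *m psi j) 0 0 = 0.
  have h : (adjmx w *m rho *m w) 0 0 = 0 by rewrite hwr mul0mx mxE.
  move: h; rewrite hrho mulmx_sumr mulmx_suml summxE.
  have hge : forall j : 'I_K, true -> 0 <= (adjmx w *m ((mu j)%:C *: (psi j *m adjmx (psi j))) *m w) 0 0.
    move=> j _; rewrite -scalemxAr -scalemxAl mxE !mulmxA -[adjmx w *m psi j *m adjmx (psi j) *m w]mulmxA mx11M.
    have -> : (adjmx (psi j) *m w) 0 0 = conjc ((adjmx w *m psi j) 0 0).
      by rewrite -adjmxE adjmxM adjmxK.
    by apply: mulr_ge0; [rewrite ler0c; exact: ltW | exact: mulcJ_ge0].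
  move=> /(psumr_eq0P hge) h j; have := h j isT.
  rewrite -scalemxAr -scalemxAl mxE !mulmxA -[adjmx w *m psi j *m adjmx (psi j) *m w]mulmxA mx11M.
  have -> : (adjmx (psi j) *m w) 0 0 = conjc ((adjmx w *m psi j) 0 0).
    by rewrite -adjmxE adjmxM adjmxK.
  move/eqP; rewrite mulf_eq0 mulcJ_eq0 => /orP [|/eqP //].
  by move=> /eqP [hm0]; move: (hmu j); rewrite hm0 ltxx.
have : (adjmx w *m w) 0 0 = 0.
  have e : adjmx w *m w = adjmx w *m psi k - adjmx w *m (M *m adjmx M) *m psi k.
    by rewrite {2}/w mulmxBr !mulmxA.
  by rewrite e hwP mul0mx subr0 hz.
move=> /vec_eq0 /eqP; rewrite /w subr_eq0 => /eqP {1}->.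
by rewrite mulmxA.
Qed.

Lemma corr_lengthQ (X : 'M[C]_d) : corr_length X = Q X X.
Proof. by rewrite /corr_length /Q; apply: eq_bigr => s _; rewrite expr2. Qed.

Lemma eq_Bf (G : 'I_4 -> 'I_4 -> R) x x' y y' : (forall j, x j = x' j) -> (forall j, y j = y' j) ->
  Bf G x y = Bf G x' y'.
Proof.
move=> hx hy; rewrite /Bf; apply: eq_bigr => k _; apply: eq_bigr => l _.
by rewrite hx hy.
Qed.

Lemma inv2C : (2^-1 : C) = (2^-1 : R)%:C.
Proof. by rewrite fmorphV rmorph_nat. Qed.

Lemma core K (mu : 'I_K -> R) psi : pure_decomposition rho mu psi ->
  let phi k := adjmx M *m psi k in
  let c k := coordZ (phi k *m adjmx (phi k)) in
  \sum_k (mu k)%:C * corr_length_pure (psi k) =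
  corr_length rho + 2^-1 * (1 - \tr (rho *m rho)) * wmin +
  (\sum_k mu k * (Bf Gr (fun j => c k j - cb j) (fun j => c k j - cb j)
                  - wr * Bf idG (fun j => c k j - cb j) (fun j => c k j - cb j)))%:C.
Proof.
move=> hdec phi c.
have hsp := in_span hdec.
case: (hdec) => hmu hsum hunit hrho.
have hpsi k : psi k = M *m phi k by rewrite [LHS]hsp.
have hpp k : psi k *m adjmx (psi k) = M *m (phi k *m adjmx (phi k)) *m adjmx M.
  by rewrite {1 2}hpsi adjmxM !mulmxA.
have hphi k : adjmx (phi k) *m phi k = 1.
  by rewrite /phi adjmxM adjmxK mulmxA -(hunit k) {4}(hsp k) !mulmxA.
have hcb j : cb j = \sum_k mu k * c k j.
  rewrite /cb /Zb hrho mulmx_sumr mulmx_suml.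
  rewrite (eq_bigr (fun k => (mu k)%:C *: (phi k *m adjmx (phi k)))); last first.
    by move=> k _; rewrite -scalemxAr -scalemxAl /phi adjmxM adjmxK !mulmxA.
  by rewrite coordZ_lin.
have hF k : corr_length_pure (psi k) = (Bf Gr (c k) (c k))%:C.
  rewrite /corr_length_pure corr_lengthQ hpp.
  by rewrite {1 2}(herm_bloch (pure_herm (phi k))) F_bloch.
have hFr : corr_length rho = (Bf Gr cb cb)%:C.
  by rewrite corr_lengthQ rho_Zb Zb_bloch F_bloch.
have hnorm k : Bf idG (c k) (c k) = 1 / 2 by rewrite Bf_id pure_norm.
have dG := Bf_decomp c Gr hsum.
have dI := Bf_decomp c idG hsum.
rewrite -(eq_Bf Gr hcb hcb) in dG; rewrite -(eq_Bf idG hcb hcb) in dI.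
have sI : \sum_i mu i * Bf idG (c i) (c i) = 1 / 2.
  rewrite (eq_bigr (fun i => mu i * (1 / 2))); last by move=> i _; rewrite hnorm.
  by rewrite -mulr_suml hsum mul1r.
rewrite sI Bf_id in dI.
have eyG : forall i, Bf Gr (fun j => c i j - \sum_i' mu i' * c i' j) (fun j => c i j - \sum_i' mu i' * c i' j)
   = Bf Gr (fun j => c i j - cb j) (fun j => c i j - cb j).
  by move=> i; apply: eq_Bf => j; rewrite hcb.
have eyI : forall i, Bf idG (fun j => c i j - \sum_i' mu i' * c i' j) (fun j => c i j - \sum_i' mu i' * c i' j)
   = Bf idG (fun j => c i j - cb j) (fun j => c i j - cb j).
  by move=> i; apply: eq_Bf => j; rewrite hcb.
rewrite (eq_bigr _ (fun i _ => congr1 (fun x => mu i * x) (eyG i))) in dG.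
rewrite (eq_bigr _ (fun i _ => congr1 (fun x => mu i * x) (eyI i))) in dI.
rewrite (eq_bigr (fun k => (mu k * Bf Gr (c k) (c k))%:C)); last by move=> k _; rewrite hF RCM.
rewrite -RC_sum dG hFr tr_rho2 {1}wmin_real inv2C -/wr.
rewrite -[1 : C]/((1 : R)%:C) -rmorphB -!RCM -!RCD; congr (_%:C).
set A := fun k => Bf Gr (fun j : 'I_4 => c k j - cb j) (fun j : 'I_4 => c k j - cb j).
set B := fun k => Bf idG (fun j : 'I_4 => c k j - cb j) (fun j : 'I_4 => c k j - cb j).
have -> : \sum_k mu k * (A k - wr * B k) = \sum_k mu k * A k - wr * \sum_k mu k * B k.
  by rewrite mulr_sumr -sumrB; apply: eq_bigr => k _; rewrite /A /B; ring.
rewrite -/(A _) in dG; rewrite -/(B _) in dI.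
have eA : \sum_(i < K) mu i * Bf Gr (fun j : 'I_4 => c i j - cb j) (fun j : 'I_4 => c i j - cb j) = \sum_k mu k * A k by [].
have eB : \sum_(i < K) mu i * Bf idG (fun j : 'I_4 => c i j - cb j) (fun j : 'I_4 => c i j - cb j) = \sum_k mu k * B k by [].
rewrite eA; rewrite eB in dI.
move: dI; set S1 := \sum_k mu k * B k; set S2 := \sum_k cb k ^+ 2 => dI.
have hS1 : S1 = 1 / 2 - S2 by lra.
by rewrite hS1; field.
Qed.

Lemma phi_unit K (mu : 'I_K -> R) psi : pure_decomposition rho mu psi ->
  forall k, adjmx (adjmx M *m psi k) *m (adjmx M *m psi k) = 1.
Proof.
move=> hdec k; have hsp := in_span hdec; case: hdec => _ _ hunit _.
by rewrite adjmxM adjmxK mulmxA -(hunit k) {4}(hsp k) !mulmxA.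
Qed.

Definition ydef (phi : 'cV[C]_2) j := coordZ (phi *m adjmx phi) j - cb j.

Lemma bracket_ge0 (phi : 'cV[C]_2) : adjmx phi *m phi = 1 ->
  0 <= Bf Gr (ydef phi) (ydef phi) - wr * Bf idG (ydef phi) (ydef phi).
Proof.
move=> hphi; set y := ydef phi.
have hy : y k0 = 0 by rewrite /y /ydef pure_coord0 // cb0 subrr.
rewrite Bf_lift // Bf_id sum4_lift // subr_ge0.
exact: (spec_real (fun i => y (lift ord0 i))).
Qed.

Lemma lower K (mu : 'I_K -> R) psi : pure_decomposition rho mu psi ->
  corr_length rho + 2^-1 * (1 - \tr (rho *m rho)) * wmin <=
  \sum_k (mu k)%:C * corr_length_pure (psi k).
Proof.
move=> hdec; rewrite (core hdec) lerDl ler0c; apply: sumr_ge0 => k _.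
apply: mulr_ge0; first by case: hdec => hmu _ _ _; exact: ltW.
exact: (bracket_ge0 (phi_unit hdec k)).
Qed.

Lemma ReMR (z : C) (x : R) : Re (z * x%:C) = Re z * x.
Proof. by case: z => a b /=; rewrite mulr0 subr0. Qed.
Lemma ImMR (z : C) (x : R) : Im (z * x%:C) = Im z * x.
Proof. by case: z => a b /=; rewrite mulr0 add0r. Qed.
Lemma ImRM (x : R) (z : C) : Im (x%:C * z) = x * Im z.
Proof. by case: z => a b /=; rewrite mul0r addr0. Qed.
Lemma ImD (x y : C) : Im (x + y) = Im x + Im y. Proof. by case: x; case: y. Qed.
Lemma Im_sum I (r : seq I) (P : pred I) (F : I -> C) :
  Im (\sum_(i <- r | P i) F i) = \sum_(i <- r | P i) Im (F i).
Proof. exact: (big_morph _ ImD (erefl (Im (0 : C)))). Qed.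

Lemma normalize (u : 'I_3 -> R) i0 : u i0 != 0 ->
  (forall j, \sum_i u i * Wr i j = wr * u j) ->
  exists e : 'I_3 -> R, \sum_i e i ^+ 2 = 1 /\ forall j, \sum_i e i * Wr i j = wr * e j.
Proof.
move=> hu heq.
have hn : 0 < \sum_i u i ^+ 2.
  rewrite (bigD1 i0) //=; apply: ltr_wpDr; first by apply: sumr_ge0 => i _; exact: sqr_ge0.
  by rewrite lt_def sqrf_eq0 hu sqr_ge0.
set s := Num.sqrt (\sum_i u i ^+ 2).
have hs : 0 < s by rewrite sqrtr_gt0.
have hs2 : s ^+ 2 = \sum_i u i ^+ 2 by rewrite sqr_sqrtr // ltW.
exists (fun i => u i / s); split.
  rewrite (eq_bigr (fun i => u i ^+ 2 / s ^+ 2)); last by move=> i _; rewrite expr_div_n.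
  by rewrite -mulr_suml -hs2 divff // expf_neq0 // lt0r_neq0.
move=> j; rewrite (eq_bigr (fun i => (u i * Wr i j) / s)); last by move=> i _; rewrite mulrAC.
by rewrite -mulr_suml heq mulrA.
Qed.

Lemma real_eigvec : exists e : 'I_3 -> R,
  \sum_i e i ^+ 2 = 1 /\ forall j, \sum_i e i * Wr i j = wr * e j.
Proof.
case/eigenvalueP: heig => v hv hv0.
have hj j : \sum_i v 0 i * (Wr i j)%:C = wr%:C * v 0 j.
  move: (congr1 (fun A : 'rV[C]_3 => A 0 j) hv); rewrite !mxE -wmin_real => <-.
  by apply: eq_bigr => i _; rewrite (WE i j).
have hRe j : \sum_i Re (v 0 i) * Wr i j = wr * Re (v 0 j).
  by move: (congr1 (@complex.Re R) (hj j)); rewrite Re_sum ReRM => <-; apply: eq_bigr => i _; rewrite ReMR.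
have hIm j : \sum_i Im (v 0 i) * Wr i j = wr * Im (v 0 j).
  by move: (congr1 (@complex.Im R) (hj j)); rewrite Im_sum ImRM => <-; apply: eq_bigr => i _; rewrite ImMR.
case: (pickP (fun i => v 0 i != 0)) => [i hi | h]; last first.
  case/negP: hv0; apply/eqP/rowP => i; rewrite mxE; apply/eqP.
  by move/negbFE: (h i).
have [hr|hr] := eqVneq (Re (v 0 i)) 0.
  have hi2 : Im (v 0 i) != 0.
    apply: contra hi => /eqP him; apply/eqP.
    by move: hr him; case: (v 0 i) => a b /= -> ->.
  exact: (normalize hi2 hIm).
exact: (normalize hr hRe).
Qed.

Definition j0 := @Ordinal 3 0 isT.
Definition j1 := @Ordinal 3 1 isT.
Definition j2 := @Ordinal 3 2 isT.

Lemma sum3 (V : nmodType) (F : 'I_3 -> V) : \sum_(i < 3) F i = F j0 + F j1 + F j2.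
Proof.
rewrite !big_ord_recl big_ord0 addr0 !addrA.
by congr (_ + _ + _); congr F; apply: val_inj.
Qed.

Lemma liftj0 : lift ord0 j0 = k1 :> 'I_4. Proof. by apply: val_inj. Qed.
Lemma liftj1 : lift ord0 j1 = k2 :> 'I_4. Proof. by apply: val_inj. Qed.
Lemma liftj2 : lift ord0 j2 = k3 :> 'I_4. Proof. by apply: val_inj. Qed.

Lemma four_cases (j : 'I_4) : [\/ j = k0, j = k1, j = k2 | j = k3].
Proof.
case: j => [[|[|[|[|j]]]] Hj] //.
- by apply: Or41; apply: val_inj.
- by apply: Or42; apply: val_inj.
- by apply: Or43; apply: val_inj.
- by apply: Or44; apply: val_inj.
Qed.

Lemma bracket_zero (e : 'I_3 -> R) (y : 'I_4 -> R) t :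
  \sum_i e i ^+ 2 = 1 -> (forall j, \sum_i e i * Wr i j = wr * e j) ->
  y k0 = 0 -> (forall i, y (lift ord0 i) = t * e i) ->
  Bf Gr y y - wr * Bf idG y y = 0.
Proof.
move=> he1 he2 hy0 hy.
rewrite Bf_lift // Bf_id sum4_lift //.
rewrite [X in wr * X](eq_bigr (fun i => t ^+ 2 * e i ^+ 2)); last by move=> i _; rewrite hy; ring.
rewrite -[X in wr * X]mulr_sumr he1 mulr1.
rewrite exchange_big /= (eq_bigr (fun j => t ^+ 2 * (wr * e j ^+ 2))); last first.
  move=> j _; rewrite (eq_bigr (fun i => t ^+ 2 * e j * (e i * Wr i j))); last first.
    by move=> i _; rewrite !hy /Wr; ring.
  by rewrite -mulr_sumr he2; ring.
by rewrite -mulr_sumr -mulr_sumr he1; ring.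
Qed.

Lemma eq_blochZ (c c' : 'I_4 -> R) : (forall j, c j = c' j) -> blochZ c = blochZ c'.
Proof. by move=> h; rewrite /blochZ; apply: eq_bigr => k _; rewrite h. Qed.

Lemma existence : exists K (mu : 'I_K -> R) (psi : 'I_K -> 'cV[C]_d),
  pure_decomposition rho mu psi /\
  \sum_(k < K) (mu k)%:C * corr_length_pure (psi k) =
  corr_length rho + 2^-1 * (1 - \tr (rho *m rho)) * wmin.
Proof.
have [e [he1 he2]] := real_eigvec.
pose r := fun i : 'I_3 => 2 * cb (lift ord0 i).
have hrr : \sum_i r i ^+ 2 < 1.
  by rewrite sum3 /r liftj0 liftj1 liftj2; have := cb_pos; lra.
pose b := \sum_i r i * e i.
pose q := 1 - \sum_i r i ^+ 2.
have hq : 0 < q by rewrite /q; lra.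
pose D := Num.sqrt (b ^+ 2 + q).
have hD2 : D ^+ 2 = b ^+ 2 + q by rewrite sqr_sqrtr //; apply: addr_ge0; [exact: sqr_ge0 | exact: ltW].
have hD0 : 0 <= D by exact: sqrtr_ge0.
have hDb1 : 0 < D + b by nra.
have hDb2 : 0 < D - b by nra.
have hDp : 0 < D by lra.
have hDn : 2 * D != 0 by rewrite mulf_neq0 ?pnatr_eq0 ?lt0r_neq0.
pose t1 := D - b; pose t2 := - b - D.
pose m1 := (b + D) / (2 * D); pose m2 := (D - b) / (2 * D).
have hD' : D != 0 by rewrite lt0r_neq0.
have hm : m1 + m2 = 1 by rewrite /m1 /m2; field.
have ht : m1 * t1 + m2 * t2 = 0 by rewrite /m1 /m2 /t1 /t2; field.
have hm1 : 0 < m1 by rewrite /m1 divr_gt0 //; lra.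
have hm2 : 0 < m2 by rewrite /m2 divr_gt0 //; lra.
have hsq t : \sum_i (r i + t * e i) ^+ 2 = \sum_i r i ^+ 2 + 2 * t * b + t ^+ 2.
  rewrite (eq_bigr (fun i => r i ^+ 2 + (2 * t) * (r i * e i) + t ^+ 2 * e i ^+ 2)); last by move=> i _; ring.
  by rewrite !big_split /= -!mulr_sumr he1 mulr1.
have hn1 : \sum_i (r i + t1 * e i) ^+ 2 = 1 by rewrite hsq /t1; rewrite /q in hD2; lra.
have hn2 : \sum_i (r i + t2 * e i) ^+ 2 = 1 by rewrite hsq /t2; rewrite /q in hD2; lra.
rewrite sum3 in hn1; rewrite sum3 in hn2.
have [p1 [u1 [c10 [c11 [c12 c13]]]]] := bloch_state hn1.
have [p2 [u2 [c20 [c21 [c22 c23]]]]] := bloch_state hn2.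
pose ph := fun k : 'I_2 => if val k == 0%N then p1 else p2.
pose mu := fun k : 'I_2 => if val k == 0%N then m1 else m2.
pose psi := fun k : 'I_2 => M *m ph k.
have hph k : adjmx M *m psi k = ph k by rewrite /psi mulmxA MtM mul1mx.
clearbody m1 m2 t1 t2.
have mix (x y : R) : m1 * ((2 * x + t1 * y) / 2) + m2 * ((2 * x + t2 * y) / 2) = x.
  have -> : m1 * ((2 * x + t1 * y) / 2) + m2 * ((2 * x + t2 * y) / 2) =
    (m1 + m2) * x + (m1 * t1 + m2 * t2) * y / 2 by field.
  by rewrite hm ht; field.
have hdec : pure_decomposition rho mu psi.
  split.
  - by move=> k; case: (two_cases k) => -> /=.
  - by rewrite sum2' /=.
  - move=> k; rewrite /psi adjmxM -mulmxA [adjmx M *m (M *m _)]mulmxA MtM mul1mx.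
    by case: (two_cases k) => -> /=.
  rewrite rho_Zb Zb_bloch.
  have -> : \sum_k (mu k)%:C *: (psi k *m adjmx (psi k)) =
     M *m (\sum_k (mu k)%:C *: (ph k *m adjmx (ph k))) *m adjmx M.
    rewrite mulmx_sumr mulmx_suml; apply: eq_bigr => k _.
    by rewrite -scalemxAr -scalemxAl /psi adjmxM !mulmxA.
  congr (M *m _ *m adjmx M).
  rewrite (eq_bigr (fun k => (mu k)%:C *: blochZ (coordZ (ph k *m adjmx (ph k))))); last first.
    by move=> k _; rewrite -herm_bloch // pure_herm.
  rewrite -blochZ_lin; apply: eq_blochZ => j; rewrite sum2' /= /mu /ph /=.
  case: (four_cases j) => ->.
  - by rewrite c10 c20 cb0; lra.
  - by rewrite c11 c21 /r liftj0 mix.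
  - by rewrite c12 c22 /r liftj1 mix.
  - by rewrite c13 c23 /r liftj2 mix.
exists 2%N, mu, psi; split => //.
rewrite (core hdec) big1 ?addr0 //= => k _.
rewrite hph; apply/eqP; rewrite mulf_eq0; apply/orP; right; apply/eqP.
have three (i : 'I_3) : [\/ i = j0, i = j1 | i = j2].
  case: i => [[|[|[|i]]] Hi] //.
  - by apply: Or31; apply: val_inj.
  - by apply: Or32; apply: val_inj.
  - by apply: Or33; apply: val_inj.
case: (two_cases k) => -> /=; rewrite /ph /=.
- apply: (bracket_zero (t := t1 / 2) he1 he2); first by rewrite c10 cb0 subrr.
  move=> i; case: (three i) => ->.
  + by rewrite liftj0 c11 /r liftj0; field.
  + by rewrite liftj1 c12 /r liftj1; field.
  + by rewrite liftj2 c13 /r liftj2; field.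
- apply: (bracket_zero (t := t2 / 2) he1 he2); first by rewrite c20 cb0 subrr.
  move=> i; case: (three i) => ->.
  + by rewrite liftj0 c21 /r liftj0; field.
  + by rewrite liftj1 c22 /r liftj1; field.
  + by rewrite liftj2 c23 /r liftj2; field.
Qed.

Lemma final : convex_roof_value rho (corr_length rho + 2^-1 * (1 - \tr (rho *m rho)) * wmin).
Proof.
split; first exact: existence.
by move=> K mu psi hdec; exact: lower.
Qed.

End Main.

Theorem theorem5 (R : realType) (N : nat) (rho : 'M[R[i]]_(2 ^ N))
    (v0 v1 : 'cV[R[i]]_(2 ^ N)) (wmin : R[i]) :
  density_matrix rho ->
  \rank rho = 2%N ->
  adjmx v0 *m v0 = 1 -> adjmx v1 *m v1 = 1 -> adjmx v0 *m v1 = 0 ->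
  (col_mx v0^T v1^T == rho^T)%MS ->
  eigenvalue (Wmat v0 v1) wmin ->
  (forall w, eigenvalue (Wmat v0 v1) w -> wmin <= w) ->
  convex_roof_value rho
    (corr_length rho + 2^-1 * (1 - \tr (rho *m rho)) * wmin).
Proof.
move=> hdm hrank h0 h1 h01 hspan heig hmin.
exact: (final hdm hrank h0 h1 h01 hspan heig hmin).
Qed.
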